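(* Let $\{\emptyset,\Omega\}=\mathcal{F}_0\subseteq\cdots\subseteq\mathcal{F}_n$ be $\sigma$-fields on a probability space and let $(\xi_i,\mathcal{F}_i)_{i=1,\dots,n}$ be supermartingale differences (each $\xi_i$ is $\mathcal{F}_i$-measurable, integrable, with $\mathbf{E}(\xi_i\mid\mathcal{F}_{i-1})\le0$). Suppose $\mathbf{E}|\xi_i|^\beta<\infty$ for a constant $\beta\in(1,2)$. Then for all $\lambda>0$, \[ \mathbf{E}\Big(\exp\big\{\lambda\xi_i-\lambda^\beta(\xi_i^+)^\beta\big\}\,\Big|\,\mathcal{F}_{i-1}\Big)\le\exp\Big\{\lambda^\beta\,\mathbf{E}\big((\xi_i^-)^\beta\mid\mathcal{F}_{i-1}\big)\Big\}, \] where $x^+=\max\{x,0\}$ and $x^-=-\min\{x,0\}$. *)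

(* Defs.v *)
From HB Require Import structures.
From mathcomp Require Import all_boot all_order all_algebra.
From mathcomp Require Import all_classical all_reals all_analysis.
Set Implicit Arguments. Unset Strict Implicit. Unset Printing Implicit Defensive.
Import Order.TTheory GRing.Theory Num.Theory.
Local Open Scope classical_set_scope.
Local Open Scope ring_scope.

Definition sub_sigma d (T : measurableType d) (G : set (set T)) : Prop :=
  sigma_algebra setT G /\ G `<=` measurable.

Definition G_measurable d (T : measurableType d) (R : realType)
  (G : set (set T)) (f : T -> R) : Prop :=
  forall B : set R, measurable B -> G (f @^-1` B).

Definition cond_exp d (T : measurableType d) (R : realType)
  (P : probability T R) (G : set (set T)) (f g : T -> R) : Prop :=
  [/\ G_measurable G g, P.-integrable setT (EFin \o g) &
      forall A, G A -> (\int[P]_(x in A) (g x)%:E = \int[P]_(x in A) (f x)%:E)%E].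

(* Main.v *)
Require Import Defs.
From HB Require Import structures.
From mathcomp Require Import all_boot all_order all_algebra.
From mathcomp Require Import all_classical all_reals all_analysis.
From mathcomp Require Import ring lra.
Import Order.TTheory GRing.Theory Num.Theory.
Local Open Scope classical_set_scope.
Local Open Scope ring_scope.

Lemma powb_small {R : realType} (b z : R) : b <= 2 -> 0 <= z -> z <= 1 -> z ^+ 2 <= z `^ b.
Proof.
move=> b2 z0 z1; have [->|zn0] := eqVneq z 0; first by rewrite expr0n /= powR_ge0.
rewrite -powR_mulrn //; apply: ger_powR => //; rewrite z1 andbT lt_neqAle eq_sym zn0 z0 //.
Qed.

Lemma powb_big {R : realType} (b z : R) : 1 <= b -> 1 <= z -> z <= z `^ b.
Proof. by move=> b1 z1; apply: le1r_powR. Qed.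

Lemma key1 {R : realType} (b z : R) : 1 <= b <= 2 -> 0 <= z -> expR (- z) <= 1 - z + z `^ b.
Proof.
move=> /andP[b1 b2] z0; have [z1|z1] := leP z 1.
  have h := @powb_small _ b z b2 z0 z1.
  have e1 : expR (-z) * expR z = 1 by rewrite -expRD addNr expR0.
  have e2 := expR_ge1Dx z. have e3 : 0 < expR (-z) := expR_gt0 _.
  suff : expR (-z) <= 1 - z + z ^+ 2 by lra.
  have h1 : expR (-z) * (1 + z) <= 1 by rewrite -e1; apply: ler_wpM2l; lra.
  have h2 : 1 <= (1 + z) * (1 - z + z ^+ 2).
    have : 0 <= z ^+ 3 by rewrite exprn_ge0.
    have -> : (1 + z) * (1 - z + z ^+ 2) = 1 + z ^+ 3 by ring.
    lra.
  rewrite -(@ler_pM2r _ (1 + z)); last lra.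
  rewrite [X in _ <= X]mulrC; lra.
have h := @powb_big _ b z b1 (ltW z1).
have : expR (-z) <= 1 by rewrite expR_le1 lerNl oppr0.
lra.
Qed.

Lemma key2 {R : realType} (b z : R) : 1 <= b <= 2 -> 0 <= z -> expR (z - z `^ b) <= 1 + z.
Proof.
move=> /andP[b1 b2] z0; have [z1|z1] := leP z 1.
  have h := @powb_small _ b z b2 z0 z1.
  have hh2 : expR (z - z `^ b) <= expR (z - z ^+ 2) by rewrite ler_expR; lra.
  have e1 : expR (z - z ^+ 2) * expR (z ^+ 2 - z) = 1 by rewrite -expRD subrKA subrr expR0.
  have e2 := expR_ge1Dx (z ^+ 2 - z). have e3 : 0 < expR (z - z ^+ 2) := expR_gt0 _.
  suff : expR (z - z ^+ 2) <= 1 + z by lra.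
  have h1 : expR (z - z ^+ 2) * (1 - z + z ^+ 2) <= 1.
    rewrite -e1; apply: ler_wpM2l; lra.
  have h2 : 1 <= (1 + z) * (1 - z + z ^+ 2).
    have : 0 <= z ^+ 3 by rewrite exprn_ge0.
    have -> : (1 + z) * (1 - z + z ^+ 2) = 1 + z ^+ 3 by ring.
    lra.
  have q0 : 0 < 1 - z + z ^+ 2 by nra.
  rewrite -(@ler_pM2r _ (1 - z + z ^+ 2)) //; lra.
have h := @powb_big _ b z b1 (ltW z1).
have : expR (z - z `^ b) <= 1 by rewrite expR_le1; lra.
lra.
Qed.

Lemma pw {R : realType} (b l x : R) : 1 < b < 2 -> 0 < l ->
 expR (l * x - l `^ b * (Num.max x 0) `^ b) <= 1 + l * x + l `^ b * (- Num.min x 0) `^ b.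
Proof.
move=> /andP[b1 b2] l0; have bb : 1 <= b <= 2 by rewrite !ltW.
have bn0 : b != 0 by apply/eqP => b0; move: b1; rewrite b0; lra.
have [x0|x0] := leP 0 x.
  rewrite oppr0 powR0 // mulr0 addr0.
  rewrite -powRM; [|exact: ltW|exact: x0].
  by apply: key2 => //; rewrite mulr_ge0 // ltW.
rewrite powR0 // mulr0 subr0.
rewrite -powRM; [|exact: ltW|by rewrite oppr_ge0 ltW].
have hz : 0 <= l * - x by rewrite mulr_ge0 ?oppr_ge0 // ltW.
by have := @key1 _ b (l * - x) bb hz; rewrite mulrN opprK.
Qed.

Section Gfacts.
Context {d : measure_display} {T : measurableType d} {R : realType}.

Lemma Gmeas_meas (G : set (set T)) (f : T -> R) :
  sub_sigma G -> G_measurable G f -> measurable_fun setT f.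
Proof. by move=> [_ GM] Gf _ B mB; rewrite setTI; exact: GM (Gf B mB). Qed.

Lemma G_setI (G : set (set T)) A B : sub_sigma G -> G A -> G B -> G (A `&` B).
Proof.
move=> [[G0 GC GU] _] GA GB.
have -> : A `&` B = setT `\` (\bigcup_i bigcup2 (setT `\` A) (setT `\` B) i).
  by rewrite bigcup2E !setTD -setCI setCK.
apply: (GC); apply: (GU) => -[|[|n]] //=; by apply: (GC).
Qed.

Lemma G_gt (G : set (set T)) (f : T -> R) c : G_measurable G f -> G [set x | c < f x].
Proof.
move=> Gf; have := Gf _ (measurable_itv `]c, +oo[).
congr G; apply/seteqP; split => x /=; by rewrite in_itv /= andbT.
Qed.

Lemma G_lt (G : set (set T)) (f : T -> R) c : G_measurable G f -> G [set x | f x < c].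
Proof.
move=> Gf; have := Gf _ (measurable_itv `]-oo, c[).
congr G; apply/seteqP; split => x /=; by rewrite in_itv /=.
Qed.

Lemma ae_le (P : probability T R) (G : set (set T)) (u v : T -> R) :
  sub_sigma G -> G_measurable G u -> G_measurable G v ->
  P.-integrable setT (EFin \o u) -> P.-integrable setT (EFin \o v) ->
  (forall A, G A -> (\int[P]_(x in A) (u x)%:E <= \int[P]_(x in A) (v x)%:E)%E) ->
  {ae P, forall x, u x <= v x}.
Proof.
move=> sG Gu Gv iu iv Huv.
pose q (k m j : nat) : R := (m%:R - j%:R) / k.+1%:R.
pose B k m j := [set x | q k m j + k.+1%:R^-1 < u x] `&` [set x | v x < q k m j].
have GB k m j : G (B k m j) by apply: G_setI => //; [exact: G_gt|exact: G_lt].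
have PB k m j : P (B k m j) = 0%E.
  have mB : measurable (B k m j) by case: sG => _; apply; apply: GB.
  have h1 : ((q k m j + k.+1%:R^-1)%:E * P (B k m j) <= \int[P]_(x in B k m j) (u x)%:E)%E.
    rewrite -integral_cst //; apply: le_integral => //.
      exact: finite_measure_integrable_cst.
      exact: integrableS iu.
    by move=> x; rewrite inE => -[/= /ltW hx _]; rewrite lee_fin.
  have h2 : (\int[P]_(x in B k m j) (v x)%:E <= (q k m j)%:E * P (B k m j))%E.
    rewrite -integral_cst //; apply: le_integral => //.
      exact: integrableS iv.
      exact: finite_measure_integrable_cst.
    by move=> x; rewrite inE => -[_ /= /ltW hx]; rewrite lee_fin.
  have h3 := Huv _ (GB k m j).
  have hf : P (B k m j) \is a fin_num by apply: fin_num_measure.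
  rewrite -(fineK hf) in h1 h2 *.
  have p0 : 0 <= fine (P (B k m j)) by apply: fine_ge0; apply: measure_ge0.
  have := le_trans h1 (le_trans h3 h2); rewrite -!EFinM lee_fin => h.
  have ik : 0 < k.+1%:R^-1 :> R by rewrite invr_gt0 ltr0Sn.
  have h' : k.+1%:R^-1 * fine (P (B k m j)) <= 0 by rewrite mulrDl gerDl in h.
  rewrite pmulr_rle0 // in h'.
  by congr EFin; apply/eqP; rewrite eq_le h' p0.
have NB : P.-negligible (\bigcup_k \bigcup_m \bigcup_j B k m j).
  apply: negligible_bigcup => k; apply: negligible_bigcup => m.
  apply: negligible_bigcup => j; exists (B k m j); split => //.
    by case: sG => _; apply; apply: GB.
  exact: PB.
apply: negligibleS NB => x /= /negP; rewrite -ltNge => hvu.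
have [k hk] := @ltr_add_invr R 0 ((u x - v x) / 2) ltac:(lra).
pose K : R := k.+1%:R.
have K0 : 0 < K by rewrite /K ltr0Sn.
have hk' : 1 < (u x - v x) / 2 * K.
  by rewrite add0r -(ltr_pM2r K0) /K mulVf in hk.
set fl := Num.floor (v x * K).
have [hfl1 hfl2] : fl%:~R <= v x * K /\ v x * K < fl%:~R + 1.
  by have /andP[a b] := floor_itv (v x * K); rewrite intrD in b.
have [m [j hz]] : exists m j, (fl + 1)%:~R = m%:R - j%:R :> R.
  case: (fl + 1)%R => [m|n]; first by exists m, 0%N; rewrite subr0.
  by exists 0%N, n.+1; rewrite NegzE sub0r mulrNz.
exists k => //; exists m => //; exists j => //; split => /=.
  rewrite /q -/K -hz -[X in _ + X]mul1r -mulrDl ltr_pdivrMr // intrD; nra.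
by rewrite /q -/K -hz ltr_pdivlMr // intrD.
Qed.

End Gfacts.

Theorem lemma5p1 (d : measure_display) (T : measurableType d) (R : realType)
  (P : probability T R) (n : nat) (F : nat -> set (set T)) (xi : nat -> T -> R)
  (beta : R) :
  F 0%N = [set A | A = set0 \/ A = setT] ->
  (forall i, (i <= n)%N -> sub_sigma (F i)) ->
  (forall i, (i < n)%N -> F i `<=` F i.+1) ->
  (forall i, (1 <= i <= n)%N -> G_measurable (F i) (xi i)) ->
  (forall i, (1 <= i <= n)%N -> P.-integrable setT (EFin \o xi i)) ->
  (forall i, (1 <= i <= n)%N ->
     exists g, cond_exp P (F i.-1) (xi i) g /\ {ae P, forall x, g x <= 0}) ->
  1 < beta < 2 ->
  (forall i, (1 <= i <= n)%N ->
     (\int[P]_x (`|xi i x| `^ beta)%:E < +oo)%E) ->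
  forall i, (1 <= i <= n)%N -> forall lam : R, 0 < lam ->
  forall g h : T -> R,
    cond_exp P (F i.-1)
      (fun x => expR (lam * xi i x - lam `^ beta * (Num.max (xi i x) 0) `^ beta)) g ->
    cond_exp P (F i.-1) (fun x => (- Num.min (xi i x) 0) `^ beta) h ->
    {ae P, forall x, g x <= expR (lam `^ beta * h x)}.
Proof.
move=> _ Hsub _ Hmeas Hint Hsup /andP[Hb Hb'] Hmom i hi lam lam0 g h [Gg ig Hg] [Gh ih Hh].
have sG : sub_sigma (F i.-1) by apply: Hsub; case/andP: hi => _; apply: leq_trans; exact: leq_pred.
have mX : measurable_fun setT (xi i).
  have hin : (i <= n)%N by case/andP: hi.
  exact: (Gmeas_meas _ _ (Hsub i hin) (Hmeas _ hi)).
have [g1 [[Gg1 ig1 Hg1] g1le]] := Hsup i hi.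
set X := xi i in mX Hg Hh Hg1.
set c := lam `^ beta.
pose v x := 1 + c * h x.
have mT : measurable (setT : set T) by [].
have GMA A : F i.-1 A -> measurable A by case: sG => _; apply.
pose Y x := (- Num.min (X x) 0) `^ beta.
have mY : measurable_fun setT Y.
  apply: (measurableT_comp (measurable_realfun.measurable_powR beta)).
  exact: (measurable_realfun.measurable_funN (measurable_realfun.measurable_minr mX (measurable_cst _))).
have iY : P.-integrable setT (EFin \o Y).
  apply/integrableP; split; first exact/measurable_realfun.measurable_EFinP.
  apply: le_lt_trans (Hmom i hi).
  have -> : (fun x => `|(EFin \o Y) x|%E) = (fun x => (Y x)%:E).
    by apply/funext=> x /=; rewrite ger0_norm // powR_ge0.
  apply: ge0_le_integral => //.
  - by move=> x _; rewrite lee_fin powR_ge0.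
  - exact/measurable_realfun.measurable_EFinP.
  - apply/measurable_realfun.measurable_EFinP; apply: (measurableT_comp (measurable_realfun.measurable_powR beta)).
    by apply: measurableT_comp; [exact: measurable_realfun.normr_measurable|exact: mX].
  - move=> x _; rewrite /Y /= lee_fin.
    apply: ge0_ler_powR; rewrite ?inE ?nnegrE ?oppr_ge0 ?ge_min ?lexx ?orbT //.
    + by apply: le_trans (ltW Hb); rewrite ler01.
    + rewrite /X; case: (leP (xi i x) 0) => hx; first by rewrite ler0_norm.
      by rewrite oppr0.
have mg1 : measurable_fun setT g1 by exact: (Gmeas_meas _ _ sG Gg1).
have mh : measurable_fun setT h by exact: (Gmeas_meas _ _ sG Gh).
have Hv : {ae P, forall x, g x <= v x}.
  apply: (ae_le P (F i.-1) g v sG) => //.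
  - move=> B mB.
    have mphi : measurable_fun setT (fun y : R => 1 + c * y).
      apply: measurable_realfun.measurable_funD; first exact: measurable_cst.
      apply: measurable_realfun.measurable_funM; first exact: measurable_cst.
      exact: measurable_id.
    have := Gh _ (mphi measurableT B mB); rewrite setTI; exact.
  - have -> : EFin \o v = (fun x => (EFin \o cst 1%R) x + c%:E * (EFin \o h) x)%E.
      by apply/funext => x /=; rewrite EFinD EFinM.
    apply: integrableD => //; first exact: finite_measure_integrable_cst.
    exact: integrableZl.
  - move=> A GA; have mA := GMA _ GA.
    have sA : A `<=` setT by [].
    have iXA : P.-integrable A (EFin \o X) := integrableS mT mA sA (Hint i hi).
    have iYA : P.-integrable A (EFin \o Y) := integrableS mT mA sA iY.
    have ihA : P.-integrable A (EFin \o h) := integrableS mT mA sA ih.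
    have ig1A : P.-integrable A (EFin \o g1) := integrableS mT mA sA ig1.
    rewrite Hg //.
    have step1 : (\int[P]_(x in A) (expR (lam * X x - c * Num.max (X x) 0 `^ beta))%:E
        <= \int[P]_(x in A) (1 + lam * X x + c * Y x)%:E)%E.
      apply: ge0_le_integral => //.
      - apply/measurable_realfun.measurable_EFinP; apply: (measurable_funS mT sA).
        apply: measurableT_comp; first exact: measurable_realfun.measurable_expR.
        apply: measurable_realfun.measurable_funB.
          apply: measurable_realfun.measurable_funM => //; exact: measurable_cst.
        apply: measurable_realfun.measurable_funM; first exact: measurable_cst.
        apply: (measurableT_comp (measurable_realfun.measurable_powR beta)).
        exact: (measurable_realfun.measurable_maxr mX (measurable_cst _)).
      - apply/measurable_realfun.measurable_EFinP; apply: (measurable_funS mT sA).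
        apply: measurable_realfun.measurable_funD.
          apply: measurable_realfun.measurable_funD; first exact: measurable_cst.
          apply: measurable_realfun.measurable_funM => //; exact: measurable_cst.
        apply: measurable_realfun.measurable_funM => //; exact: measurable_cst.
      - move=> x _; rewrite lee_fin; apply: pw => //; by rewrite Hb Hb'.
    apply: (le_trans step1).
    have -> : (fun x => (1 + lam * X x + c * Y x)%:E) =
       (fun x => ((EFin \o cst 1%R) x + lam%:E * (EFin \o X) x) + c%:E * (EFin \o Y) x)%E.
      by apply/funext => x /=; rewrite !EFinD !EFinM.
    rewrite integralD //; last exact: integrableZl.
      2: by apply: integrableD => //; [exact: finite_measure_integrable_cst|exact: integrableZl].
    rewrite integralD //; [|exact: finite_measure_integrable_cst|exact: integrableZl].
    rewrite !integralZl //.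
    have eY : (\int[P]_(x in A) (EFin \o Y) x = \int[P]_(x in A) (h x)%:E)%E by rewrite Hh.
    have eX : (\int[P]_(x in A) (EFin \o X) x = \int[P]_(x in A) (g1 x)%:E)%E by rewrite Hg1.
    rewrite eY eX.
    have -> : (fun x => (v x)%:E) =
       (fun x => (EFin \o cst 1%R) x + c%:E * (EFin \o h) x)%E.
      by apply/funext => x /=; rewrite !EFinD !EFinM.
    rewrite integralD //; [|exact: finite_measure_integrable_cst|exact: integrableZl].
    rewrite integralZl //.
    apply: leeD => //; apply: geeDl; apply: mule_ge0_le0; first by rewrite lee_fin ltW.
    have mg1A : measurable_fun A g1 := measurable_funS mT sA mg1.
    have mmA : measurable_fun A (fun x => Num.min (g1 x) 0).
      exact: (measurable_realfun.measurable_minr mg1A (measurable_cst _)).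
    have -> : (\int[P]_(x in A) (g1 x)%:E = \int[P]_(x in A) (Num.min (g1 x) 0)%:E)%E.
      apply: ae_eq_integral => //.
      - exact/measurable_realfun.measurable_EFinP.
      - exact/measurable_realfun.measurable_EFinP.
      - apply: negligibleS g1le => x /= H; apply: contra_not H => hx _.
        by congr EFin; apply/esym/min_idPl.
    apply: (@le_trans _ _ (\int[P]_(x in A) (cst 0%E x))%E); last by rewrite integral0.
    apply: le_integral => //.
    - apply: le_integrable ig1A => //.
        exact/measurable_realfun.measurable_EFinP.
      move=> x _ /=; rewrite lee_fin.
      by case: (leP (g1 x) 0) => hx; rewrite ?lexx // normr0.
    - exact: integrable0.
    - by move=> x _; rewrite /= lee_fin ge_min lexx orbT.
apply: negligibleS Hv => x /= gx; apply: contra_not gx => gv.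
apply: le_trans gv _; rewrite /v; exact: expR_ge1Dx.
Qed.
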